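(* For the SVIQS system, let $\widetilde R_0=\frac{1}{\langle k\rangle}\sum_{i=1}^n\frac{\lambda(i)\varphi(i)p(i)\Lambda_i}{d(\gamma+\beta+d)}$ (the value of $R_0$ when all $\mu_k=0$). If $\widetilde R_0<1$, then the disease-free equilibrium $E^0$ is globally asymptotically stable: it is Lyapunov stable, and every solution with initial data satisfying $S_k(0),V_k(0),I_k(0),Q_k(0)\ge0$ and $S_k(0)+V_k(0)+I_k(0)+Q_k(0)=N_k^*$ for all $k$ converges to $E^0$ as $t\to\infty$.
   Context: Fix an integer $n\ge1$ and numbers $p(1),\dots,p(n)>0$ with $\sum_{k=1}^n p(k)=1$; set $\langle k\rangle=\sum_{k=1}^n kp(k)$. Fix constants $b>d>0$ and let $\Phi^*>0$ satisfy $\Phi^*=\frac{1}{\langle k\rangle}\sum_{i=1}^n \frac{i\,p(i)\,b\Phi^*}{d+bi\Phi^*}$. For $k=1,\dots,n$ put $N_k^*=\frac{bk\Phi^*}{d+bk\Phi^*}\in(0,1)$ and $\Lambda_k=bk(1-N_k^* )\Phi^*$ (so $\Lambda_k=dN_k^*>0$). Parameters: $\lambda(k)>0$, $\varphi(k)>0$, $\mu_k>0$ for $k=1,\dots,n$; constants $\beta,\gamma,\eta,\omega>0$ and $\delta\in[0,1]$. For functions $I_1(t),\dots,I_n(t)$ set $\Theta(t)=\frac{1}{\langle k\rangle}\sum_{i=1}^n\varphi(i)p(i)I_i(t)$. The SVIQS system is, for $k=1,\dots,n$: $S_k'=\Lambda_k-\lambda(k)S_k\Theta+\gamma I_k+\eta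 Q_k+\omega V_k-(\mu_k+d)S_k$, $V_k'=\mu_kS_k-\delta\lambda(k)V_k\Theta-(d+\omega)V_k$, $I_k'=\lambda(k)S_k\Theta+\delta\lambda(k)V_k\Theta-(\gamma+\beta+d)I_k$, $Q_k'=\beta I_k-(\eta+d)Q_k$. Its disease-free equilibrium $E^0$ is $S_k^0=\frac{(d+\omega)N_k^*}{\mu_k+\omega+d}$, $V_k^0=\frac{\mu_kN_k^*}{\mu_k+\omega+d}$, $I_k^0=Q_k^0=0$. *)

(* Defs.v *)
From Stdlib Require Import Reals Lra.
Open Scope R_scope.

(* sumk n f = f 1 + f 2 + ... + f n  (indices k = 1..n, as in the paper) *)
Fixpoint sumk (n : nat) (f : nat -> R) : R :=
  match n with
  | O => 0
  | S m => sumk m f + f (S m)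
  end.

Definition avgk (n : nat) (p : nat -> R) : R := sumk n (fun k => INR k * p k).

Definition Nstar (b d Phi : R) (k : nat) : R :=
  b * INR k * Phi / (d + b * INR k * Phi).

Definition Lam (b d Phi : R) (k : nat) : R :=
  b * INR k * (1 - Nstar b d Phi k) * Phi.

Definition Theta (n : nat) (p phi : nat -> R) (I : nat -> R -> R) (t : R) : R :=
  / avgk n p * sumk n (fun i => phi i * p i * I i t).

Definition S0 (b d Phi omega : R) (mu : nat -> R) (k : nat) : R :=
  (d + omega) * Nstar b d Phi k / (mu k + omega + d).
Definition V0 (b d Phi omega : R) (mu : nat -> R) (k : nat) : R :=
  mu k * Nstar b d Phi k / (mu k + omega + d).

Definition R0tilde (n : nat) (p lam phi : nat -> R) (b d Phi beta gamma : R) : R :=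
  / avgk n p * sumk n (fun i =>
     lam i * phi i * p i * Lam b d Phi i / (d * (gamma + beta + d))).

Definition right_cont0 (X : R -> R) : Prop :=
  forall eps, 0 < eps -> exists del, 0 < del /\
    forall t, 0 <= t < del -> Rabs (X t - X 0) < eps.

Definition is_solution (n : nat) (p lam phi mu : nat -> R)
    (b d Phi beta gamma eta omega delta : R)
    (S V I Q : nat -> R -> R) : Prop :=
  forall k, (1 <= k <= n)%nat ->
    right_cont0 (S k) /\ right_cont0 (V k) /\ right_cont0 (I k) /\ right_cont0 (Q k) /\
    forall t, 0 < t ->
      derivable_pt_lim (S k) t
        (Lam b d Phi k - lam k * S k t * Theta n p phi I t + gamma * I k t
         + eta * Q k t + omega * V k t - (mu k + d) * S k t) /\
      derivable_pt_lim (V k) t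
        (mu k * S k t - delta * lam k * V k t * Theta n p phi I t - (d + omega) * V k t) /\
      derivable_pt_lim (I k) t
        (lam k * S k t * Theta n p phi I t + delta * lam k * V k t * Theta n p phi I t
         - (gamma + beta + d) * I k t) /\
      derivable_pt_lim (Q k) t (beta * I k t - (eta + d) * Q k t).

Definition admissible_init (n : nat) (b d Phi : R) (S V I Q : nat -> R -> R) : Prop :=
  forall k, (1 <= k <= n)%nat ->
    0 <= S k 0 /\ 0 <= V k 0 /\ 0 <= I k 0 /\ 0 <= Q k 0 /\
    S k 0 + V k 0 + I k 0 + Q k 0 = Nstar b d Phi k.

Definition near_E0 (n : nat) (b d Phi omega : R) (mu : nat -> R)
    (S V I Q : nat -> R -> R) (r t : R) : Prop :=
  forall k, (1 <= k <= n)%nat ->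
    Rabs (S k t - S0 b d Phi omega mu k) < r /\
    Rabs (V k t - V0 b d Phi omega mu k) < r /\
    Rabs (I k t) < r /\ Rabs (Q k t) < r.

(* Main.v *)
Require Import Defs.
From Stdlib Require Import Reals Lra Lia Psatz Classical.
Open Scope R_scope.

Lemma dval f x a b : derivable_pt_lim f x a -> a = b -> derivable_pt_lim f x b.
Proof. intros H ->; exact H. Qed.
Lemma dplus f g x a b : derivable_pt_lim f x a -> derivable_pt_lim g x b ->
  derivable_pt_lim (fun t => f t + g t) x (a + b).
Proof. intros; now apply derivable_pt_lim_plus. Qed.
Lemma dminus f g x a b : derivable_pt_lim f x a -> derivable_pt_lim g x b ->
  derivable_pt_lim (fun t => f t - g t) x (a - b).
Proof. intros; now apply derivable_pt_lim_minus. Qed.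
Lemma dmult f g x a b : derivable_pt_lim f x a -> derivable_pt_lim g x b ->
  derivable_pt_lim (fun t => f t * g t) x (a * g x + f x * b).
Proof. intros; now apply derivable_pt_lim_mult. Qed.
Lemma dscal c f x a : derivable_pt_lim f x a ->
  derivable_pt_lim (fun t => c * f t) x (c * a).
Proof. intros; now apply derivable_pt_lim_scal. Qed.
Lemma dconst c x : derivable_pt_lim (fun _ => c) x 0.
Proof. apply derivable_pt_lim_const. Qed.
Lemma dexp c x : derivable_pt_lim (fun t => exp (c * t)) x (c * exp (c * x)).
Proof.
  assert (H : derivable_pt_lim (fun t => c * t) x c).
  { apply (dval _ _ (c * 1)). apply dscal. apply derivable_pt_lim_id. ring. }
  pose proof (derivable_pt_lim_comp _ _ x _ _ H (derivable_pt_lim_exp (c * x))).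
  apply (dval _ _ _ _ H0). ring.
Qed.

Lemma dcont f x l : derivable_pt_lim f x l -> continuity_pt f x.
Proof. intro H. apply derivable_continuous_pt. exists l. exact H. Qed.

Lemma sumk_ext n f g : (forall k, (1 <= k <= n)%nat -> f k = g k) -> sumk n f = sumk n g.
Proof.
  induction n; simpl; intros H; auto.
  rewrite IHn, H; auto; try lia. intros; apply H; lia.
Qed.
Lemma sumk_le n f g : (forall k, (1 <= k <= n)%nat -> f k <= g k) -> sumk n f <= sumk n g.
Proof.
  induction n; simpl; intros H; [lra|].
  assert (sumk n f <= sumk n g) by (apply IHn; intros; apply H; lia).
  assert (f (S n) <= g (S n)) by (apply H; lia). lra.
Qed.
Lemma sumk_plus n f g : sumk n (fun k => f k + g k) = sumk n f + sumk n g.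
Proof. induction n; simpl; [ring|rewrite IHn; ring]. Qed.
Lemma sumk_scal n c f : sumk n (fun k => c * f k) = c * sumk n f.
Proof. induction n; simpl; [ring|rewrite IHn; ring]. Qed.
Lemma sumk_const0 n : sumk n (fun _ => 0) = 0.
Proof. induction n; simpl; [ring|rewrite IHn; ring]. Qed.
Lemma sumk_nonneg n f : (forall k, (1 <= k <= n)%nat -> 0 <= f k) -> 0 <= sumk n f.
Proof. intros. rewrite <- (sumk_const0 n). now apply sumk_le. Qed.
Lemma sumk_pos n f : (1 <= n)%nat -> (forall k, (1 <= k <= n)%nat -> 0 < f k) -> 0 < sumk n f.
Proof.
  destruct n as [|n]; [lia|]. intros _ H. simpl.
  assert (0 <= sumk n f) by (apply sumk_nonneg; intros; apply Rlt_le, H; lia).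
  assert (0 < f (S n)) by (apply H; lia). lra.
Qed.
Lemma term_le_sumk n f k : (forall j, (1 <= j <= n)%nat -> 0 <= f j) -> (1 <= k <= n)%nat ->
  f k <= sumk n f.
Proof.
  induction n; intros H Hk; [lia|]. simpl.
  destruct (Nat.eq_dec k (S n)) as [->|Hne].
  - assert (0 <= sumk n f) by (apply sumk_nonneg; intros; apply H; lia). lra.
  - assert (f k <= sumk n f) by (apply IHn; [intros; apply H; lia| lia]).
    assert (0 <= f (S n)) by (apply H; lia). lra.
Qed.
Lemma dsumk n (f : nat -> R -> R) f' x :
  (forall k, (1 <= k <= n)%nat -> derivable_pt_lim (f k) x (f' k)) ->
  derivable_pt_lim (fun t => sumk n (fun k => f k t)) x (sumk n f').
Proof.
  induction n; intros H; simpl.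
  - apply dconst.
  - apply dplus. apply IHn; intros; apply H; lia. apply H; lia.
Qed.

Lemma rc_lim X : right_cont0 X <-> limit1_in X (fun t => 0 <= t) (X 0) 0.
Proof.
  unfold right_cont0, limit1_in, limit_in; simpl; unfold R_dist; split.
  - intros H eps He. destruct (H eps He) as [del [Hd H2]]. exists del; split; auto.
    intros x [Hx Hx2]. apply H2. rewrite ?Rminus_0_r in Hx2. rewrite Rabs_right in Hx2; lra.
  - intros H eps He. destruct (H eps He) as [del [Hd H2]]. exists del; split; auto.
    intros t Ht. apply H2. split; [lra|]. rewrite ?Rminus_0_r, Rabs_right; lra.
Qed.
Lemma rc_plus f g : right_cont0 f -> right_cont0 g -> right_cont0 (fun t => f t + g t).
Proof. rewrite !rc_lim. intros; now apply limit_plus. Qed.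
Lemma rc_mult f g : right_cont0 f -> right_cont0 g -> right_cont0 (fun t => f t * g t).
Proof. rewrite !rc_lim. intros; now apply limit_mul. Qed.
Lemma rc_const c : right_cont0 (fun _ => c).
Proof. intros eps He; exists 1; split; [lra|]; intros; rewrite Rminus_diag, Rabs_R0; lra. Qed.
Lemma rc_scal c f : right_cont0 f -> right_cont0 (fun t => c * f t).
Proof. intros; apply rc_mult; auto using rc_const. Qed.
Lemma rc_opp f : right_cont0 f -> right_cont0 (fun t => - f t).
Proof. intros H. apply (rc_scal (-1)) in H. intros eps He; destruct (H eps He) as [d [Hd H2]].
  exists d; split; auto; intros t Ht; specialize (H2 t Ht). replace (- f t - - f 0) with (-1 * f t - -1 * f 0) by ring. auto. Qed.
Lemma rc_minus f g : right_cont0 f -> right_cont0 g -> right_cont0 (fun t => f t - g t).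
Proof. intros; apply rc_plus; auto using rc_opp. Qed.
Lemma rc_cont f : continuity_pt f 0 -> right_cont0 f.
Proof.
  intros H eps He. destruct (H eps He) as [del [Hd H2]]. exists del; split; auto.
  intros t Ht. destruct (Req_dec t 0) as [->|Hne].
  - rewrite Rminus_diag, Rabs_R0; lra.
  - apply H2. split; [split; [exact I|auto]|]. simpl; unfold R_dist; rewrite Rabs_right; lra.
Qed.
Lemma rc_exp c : right_cont0 (fun t => exp (c * t)).
Proof. apply rc_cont. eapply dcont. apply dexp. Qed.
Lemma rc_sumk n (f : nat -> R -> R) :
  (forall k, (1 <= k <= n)%nat -> right_cont0 (f k)) ->
  right_cont0 (fun t => sumk n (fun k => f k t)).
Proof.
  induction n; intros H; simpl. apply rc_const.
  apply rc_plus. apply IHn; intros; apply H; lia. apply H; lia.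
Qed.
Lemma rc_ext f g : (forall t, 0 <= t -> f t = g t) -> right_cont0 f -> right_cont0 g.
Proof.
  intros He H eps Hp. destruct (H eps Hp) as [d [Hd H2]]. exists d; split; auto.
  intros t Ht. rewrite <- !He by lra. auto.
Qed.
Lemma dopp f x a : derivable_pt_lim f x a -> derivable_pt_lim (fun t => - f t) x (- a).
Proof. intros; now apply derivable_pt_lim_opp. Qed.

Lemma mono0 h h' : right_cont0 h ->
  (forall t, 0 < t -> derivable_pt_lim h t (h' t)) ->
  (forall t, 0 < t -> h' t <= 0) ->
  forall t, 0 <= t -> h t <= h 0.
Proof.
  intros Hc Hd Hn t Ht.
  destruct (Req_dec t 0) as [->|Hne]; [lra|].
  assert (Hst : forall s, 0 < s < t -> h t <= h s).
  { intros s Hs. destruct (MVT_cor2 h h' s t) as [c [Hc1 Hc2]]; [lra| |].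
    intros c Hc'. apply Hd. lra.
    assert (h' c <= 0) by (apply Hn; lra). nra. }
  apply Rnot_lt_le. intro Hlt.
  destruct (Hc (h t - h 0)) as [del [Hdel H2]]; [lra|].
  set (s := Rmin (del/2) (t/2)).
  assert (0 < s) by (unfold s; apply Rmin_pos; lra).
  assert (s <= del/2) by apply Rmin_l. assert (s <= t/2) by apply Rmin_r.
  specialize (H2 s ltac:(lra)). specialize (Hst s ltac:(lra)).
  apply Rabs_def2 in H2. lra.
Qed.

Lemma decay x x' a K rho : right_cont0 x ->
  (forall t, 0 < t -> derivable_pt_lim x t (x' t)) ->
  (forall t, 0 < t -> x' t <= - a * x t + K * exp (- rho * t)) ->
  0 <= rho < a -> 0 <= K ->
  forall t, 0 <= t -> x t <= (Rmax (x 0) 0 + K / (a - rho)) * exp (- rho * t).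
Proof.
  intros Hc Hd Hb Hr HK t Ht.
  set (Z := Rmax (x 0) 0 + K / (a - rho)).
  set (h := fun t => (x t - Z * exp (- rho * t)) * exp (a * t)).
  assert (HZ : (a - rho) * Z >= K).
  { unfold Z. assert (0 <= Rmax (x 0) 0) by apply Rmax_r.
    assert (K / (a - rho) * (a - rho) = K) by (field; lra). nra. }
  assert (H0 : h 0 <= 0).
  { unfold h. rewrite !Rmult_0_r, exp_0. unfold Z.
    assert (x 0 <= Rmax (x 0) 0) by apply Rmax_l.
    assert (0 <= K / (a - rho)) by (unfold Rdiv; apply Rmult_le_pos; [lra| left; apply Rinv_0_lt_compat; lra]). nra. }
  assert (Hm : forall t, 0 <= t -> h t <= h 0).
  { apply mono0 with (h' := fun t => (x' t + rho * Z * exp (- rho * t)) * exp (a * t)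
        + (x t - Z * exp (- rho * t)) * (a * exp (a * t))).
    - unfold h. apply rc_mult. apply rc_minus; auto. apply rc_scal, rc_exp. apply rc_exp.
    - intros s Hs. unfold h. eapply dval. apply dmult. apply dminus. apply Hd; exact Hs.
      apply dscal. apply dexp. apply dexp. cbv beta; ring.
    - intros s Hs. specialize (Hb s Hs).
      assert (Ea : 0 < exp (a * s)) by apply exp_pos.
      assert (Er : 0 < exp (- rho * s)) by apply exp_pos.
      assert (x' s + rho * Z * exp (- rho * s) + (x s - Z * exp (- rho * s)) * a <= 0) by nra.
      nra. }
  specialize (Hm t Ht).
  assert (Hq : (x t - Z * exp (- rho * t)) * exp (a * t) <= 0) by (change (h t <= 0); lra).
  assert (0 < exp (a * t)) by apply exp_pos.
  assert (x t - Z * exp (- rho * t) <= 0).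
  { apply Rnot_lt_le; intro. assert (0 < (x t - Z * exp (- rho * t)) * exp (a * t)) by (apply Rmult_lt_0_compat; lra). lra. }
  unfold Z in *; lra.
Qed.

Definition ctsD (D : R -> Prop) (f : R -> R) (t0 : R) : Prop :=
  forall eps, 0 < eps -> exists del, 0 < del /\ forall s, D s -> Rabs (s - t0) < del ->
    Rabs (f s - f t0) < eps.

Lemma ctsD_cont f t0 : continuity_pt f t0 -> ctsD (fun _ => True) f t0.
Proof.
  intros H eps He. destruct (H eps He) as [del [Hd H2]]. exists del; split; auto.
  intros s _ Hs. destruct (Req_dec s t0) as [->|Hne].
  - rewrite Rminus_diag, Rabs_R0; lra.
  - apply H2. split; [split; [exact I|auto]|]. exact Hs.
Qed.
Lemma ctsD_rc f : right_cont0 f -> ctsD (fun s => 0 <= s) f 0.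
Proof.
  intros H eps He. destruct (H eps He) as [del [Hd H2]]. exists del; split; auto.
  intros s Hs Hs2. apply H2. rewrite Rminus_0_r, Rabs_right in Hs2; lra.
Qed.
Lemma pos_nbhd D f t0 : ctsD D f t0 -> 0 < f t0 ->
  exists del, 0 < del /\ forall s, D s -> Rabs (s - t0) < del -> 0 < f s.
Proof.
  intros H Hp. destruct (H (f t0) Hp) as [del [Hd H2]]. exists del; split; auto.
  intros s Ds Hs. specialize (H2 s Ds Hs). apply Rabs_def2 in H2. lra.
Qed.
Lemma nbhd_and D (P Q : R -> Prop) t0 :
  (exists del, 0 < del /\ forall s, D s -> Rabs (s - t0) < del -> P s) ->
  (exists del, 0 < del /\ forall s, D s -> Rabs (s - t0) < del -> Q s) ->
  exists del, 0 < del /\ forall s, D s -> Rabs (s - t0) < del -> P s /\ Q s.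
Proof.
  intros [d1 [H1 P1]] [d2 [H2 P2]]. exists (Rmin d1 d2). split. apply Rmin_pos; auto.
  intros s Ds Hs. assert (Rmin d1 d2 <= d1) by apply Rmin_l. assert (Rmin d1 d2 <= d2) by apply Rmin_r.
  split; [apply P1|apply P2]; auto; lra.
Qed.
Lemma unif_nbhd n (P : nat -> R -> Prop) D t0 :
  (forall k, (1 <= k <= n)%nat -> exists del, 0 < del /\ forall s, D s -> Rabs (s - t0) < del -> P k s) ->
  exists del, 0 < del /\ forall s, D s -> Rabs (s - t0) < del -> forall k, (1 <= k <= n)%nat -> P k s.
Proof.
  induction n; intros H.
  - exists 1; split; [lra|]. intros; lia.
  - destruct (nbhd_and D (fun s => forall k, (1 <= k <= n)%nat -> P k s) (P (S n)) t0) as [del [Hd H2]].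
    apply IHn; intros; apply H; lia. apply H; lia.
    exists del; split; auto. intros s Ds Hs k Hk.
    destruct (H2 s Ds Hs) as [A1 A2]. destruct (Nat.eq_dec k (S n)) as [->|]; auto. apply A1; lia.
Qed.

Lemma left_nonneg f tau : 0 < tau -> continuity_pt f tau ->
  (forall s, 0 <= s < tau -> 0 < f s) -> 0 <= f tau.
Proof.
  intros Ht Hc Hp. apply Rnot_lt_le; intro Hn.
  destruct (pos_nbhd (fun _ => True) (fun t => - f t) tau) as [del [Hd H2]].
  - apply ctsD_cont. apply continuity_pt_opp; auto.
  - lra.
  - set (s := Rmax 0 (tau - del/2)).
    assert (0 <= s) by apply Rmax_l. assert (tau - del/2 <= s) by apply Rmax_r.
    assert (s < tau) by (unfold s; apply Rmax_lub_lt; lra).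
    specialize (H2 s I). specialize (Hp s ltac:(lra)).
    assert (- f s > 0) by (apply H2; rewrite Rabs_left; lra). lra.
Qed.

Lemma deriv_hit f tau l : 0 < tau -> derivable_pt_lim f tau l -> f tau <= 0 ->
  (forall s, 0 <= s < tau -> 0 < f s) -> l <= 0.
Proof.
  intros Ht Hd Hf Hp. apply Rnot_lt_le; intro Hl.
  destruct (Hd (l/2) ltac:(lra)) as [[del Hdp] Hdel]; simpl in Hdel.
  set (h := - Rmin (del/2) (tau/2)).
  assert (Hm : 0 < Rmin (del/2) (tau/2)) by (apply Rmin_pos; lra).
  assert (Rmin (del/2) (tau/2) <= del/2) by apply Rmin_l.
  assert (Rmin (del/2) (tau/2) <= tau/2) by apply Rmin_r.
  assert (Hh : h <> 0) by (unfold h; lra).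
  assert (Habs : Rabs h < del). { unfold h. rewrite Rabs_Ropp, Rabs_right; lra. }
  specialize (Hdel h Hh Habs). apply Rabs_def2 in Hdel.
  assert (0 < f (tau + h)) by (apply Hp; unfold h; lra).
  assert (Hq : (f (tau + h) - f tau) / h < 0).
  { unfold Rdiv; assert (/h < 0) by (apply Rinv_lt_0_compat; unfold h; lra); nra. }
  lra.
Qed.

Lemma avg_pos n p : (1 <= n)%nat -> (forall k, (1 <= k <= n)%nat -> 0 < p k) -> 0 < avgk n p.
Proof.
  intros Hn Hp. unfold avgk. apply sumk_pos; auto. intros k Hk.
  apply Rmult_lt_0_compat; auto. apply lt_0_INR; lia.
Qed.

Lemma Nstar_bounds b d Phi k : 0 < d -> d < b -> 0 < Phi -> (1 <= k)%nat ->
  0 < Nstar b d Phi k < 1.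
Proof.
  intros Hd Hb HP Hk. unfold Nstar.
  assert (1 <= INR k) by (replace 1 with (INR 1) by reflexivity; apply le_INR; lia).
  assert (0 < b * INR k * Phi) by (apply Rmult_lt_0_compat; [apply Rmult_lt_0_compat|]; lra).
  split. apply Rdiv_lt_0_compat; lra.
  apply (Rmult_lt_reg_r (d + b * INR k * Phi)); [lra|]. unfold Rdiv.
  rewrite Rmult_assoc, Rinv_l by lra. lra.
Qed.

Lemma Lam_eq b d Phi k : 0 < d -> d < b -> 0 < Phi -> (1 <= k)%nat ->
  Lam b d Phi k = d * Nstar b d Phi k.
Proof.
  intros Hd Hb HP Hk. unfold Lam, Nstar.
  assert (1 <= INR k) by (replace 1 with (INR 1) by reflexivity; apply le_INR; lia).
  assert (0 < b * INR k * Phi) by (apply Rmult_lt_0_compat; [apply Rmult_lt_0_compat|]; lra).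
  field. lra.
Qed.

Lemma conservation n p lam phi mu b d Phi beta gamma eta omega delta S V I Q :
  0 < d -> d < b -> 0 < Phi ->
  is_solution n p lam phi mu b d Phi beta gamma eta omega delta S V I Q ->
  admissible_init n b d Phi S V I Q ->
  forall k, (1 <= k <= n)%nat -> forall t, 0 <= t ->
    S k t + V k t + I k t + Q k t = Nstar b d Phi k.
Proof.
  intros Hd Hb HP Hs Hi k Hk.
  destruct (Hs k Hk) as [cS [cV [cI [cQ Hder]]]].
  destruct (Hi k Hk) as [_ [_ [_ [_ H0]]]].
  set (g := fun t => S k t + V k t + I k t + Q k t - Nstar b d Phi k).
  assert (Hc : right_cont0 g).
  { unfold g. apply rc_minus; [|apply rc_const]. repeat apply rc_plus; auto. }
  assert (Hdg : forall t, 0 < t -> derivable_pt_lim g t (- d * g t)).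
  { intros t Ht. destruct (Hder t Ht) as [dS [dV [dI dQ]]]. unfold g.
    eapply dval. apply dminus; [|apply dconst]. repeat apply dplus; eauto.
    rewrite (Lam_eq b d Phi k) by (auto; lia). ring. }
  assert (Hg0 : g 0 = 0) by (unfold g; lra).
  assert (U1 := decay g (fun t => - d * g t) d 0 0 Hc Hdg).
  assert (U2 := decay (fun t => - g t) (fun t => - d * - g t) d 0 0 (rc_opp _ Hc)).
  intros t Ht.
  assert (g t <= 0).
  { specialize (U1 ltac:(intros; lra) ltac:(lra) ltac:(lra) t Ht).
    rewrite Hg0, Rmax_left in U1 by lra. unfold Rdiv in U1. lra. }
  assert (- g t <= 0).
  { refine (_ (U2 _ _ _ _ t Ht)).
    - intro U. rewrite Hg0, Ropp_0, Rmax_left in U by lra. unfold Rdiv in U. lra.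
    - intros s Hs0. eapply dval. apply dopp. apply Hdg; auto. cbv beta; ring.
    - intros; lra.
    - lra.
    - lra. }
  unfold g in *; lra.
Qed.

Definition Cth n p phi := / avgk n p * sumk n (fun i => phi i * p i).
Definition Lc n p lam phi mu beta gamma eta omega :=
  8 * sumk n lam * Cth n p phi + sumk n mu + gamma + eta + omega + beta + 1.

Lemma prod_lb x y e C : 0 < e -> e <= 1 -> 0 < C -> -e <= x -> x <= 4 -> - e * C <= y -> y <= 4 * C ->
  - (4 * e * C) <= x * y.
Proof.
  intros. destruct (Rle_or_lt 0 x); destruct (Rle_or_lt 0 y).
  - nra.
  - assert (x * y >= 4 * y) by nra. nra.
  - nra.
  - nra.
Qed.

Lemma Theta_bounds n p phi I t e : (1 <= n)%nat -> (forall k, (1 <= k <= n)%nat -> 0 < p k /\ 0 < phi k) ->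
  (forall i, (1 <= i <= n)%nat -> - e <= I i t <= 4) ->
  - e * Cth n p phi <= Theta n p phi I t <= 4 * Cth n p phi.
Proof.
  intros Hn Hp HI. unfold Theta, Cth.
  assert (HA : 0 < avgk n p) by (apply avg_pos; auto; intros; apply Hp; auto).
  assert (0 < / avgk n p) by (apply Rinv_0_lt_compat; auto).
  assert (H1 : sumk n (fun i => - e * (phi i * p i)) <= sumk n (fun i => phi i * p i * I i t)).
  { apply sumk_le. intros i Hi. destruct (Hp i Hi). destruct (HI i Hi).
    assert (0 < phi i * p i) by (apply Rmult_lt_0_compat; auto). nra. }
  assert (H2 : sumk n (fun i => phi i * p i * I i t) <= sumk n (fun i => 4 * (phi i * p i))).
  { apply sumk_le. intros i Hi. destruct (Hp i Hi). destruct (HI i Hi).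
    assert (0 < phi i * p i) by (apply Rmult_lt_0_compat; auto). nra. }
  rewrite sumk_scal in H1, H2. split; nra.
Qed.

Lemma lem_lb l Ls e C th : 0 < l -> l <= Ls -> 0 < e -> e <= 1 -> 0 < C -> - e * C <= th ->
  l * e * th >= - Ls * e * C.
Proof.
  intros. assert (A1 : l * e * th >= l * e * (- e * C)).
  { apply Rle_ge, Rmult_le_compat_l; [|lra]. left; apply Rmult_lt_0_compat; lra. }
  assert (A2 : l * e <= Ls) by nra.
  assert (A3 : l * e * e * C <= Ls * e * C).
  { apply Rmult_le_compat_r; [lra|]. apply Rmult_le_compat_r; lra. }
  nra.
Qed.

Lemma del_lb dl X M : 0 <= dl <= 1 -> X >= - M -> 0 <= M -> dl * X >= - M.
Proof. intros. destruct (Rle_or_lt 0 X); nra. Qed.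

Lemma lem_lb2 l Ls Y M : 0 < l -> l <= Ls -> 0 <= M -> Y >= - M -> l * Y >= - Ls * M.
Proof. intros. destruct (Rle_or_lt 0 Y); nra. Qed.

Definition Good n (S V I Q : nat -> R -> R) eps L s :=
  forall k, (1 <= k <= n)%nat ->
    0 < S k s + eps * exp (L * s) /\ 0 < V k s + eps * exp (L * s) /\
    0 < I k s + eps * exp (L * s) /\ 0 < Q k s + eps * exp (L * s).

Lemma hit_step n p lam phi mu b d Phi beta gamma eta omega delta S V I Q T eps tau :
  (1 <= n)%nat ->
  (forall k, (1 <= k <= n)%nat -> 0 < p k) ->
  0 < d -> d < b -> 0 < Phi ->
  (forall k, (1 <= k <= n)%nat -> 0 < lam k /\ 0 < phi k /\ 0 < mu k) ->
  0 < beta -> 0 < gamma -> 0 < eta -> 0 < omega -> 0 <= delta <= 1 ->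
  is_solution n p lam phi mu b d Phi beta gamma eta omega delta S V I Q ->
  admissible_init n b d Phi S V I Q ->
  let L := Lc n p lam phi mu beta gamma eta omega in
  0 < eps -> eps <= exp (- L * T) -> 0 < tau <= T ->
  (forall s, 0 <= s < tau -> Good n S V I Q eps L s) -> Good n S V I Q eps L tau.
Proof.
  intros Hn Hp Hd Hb HP Hpar Hbe Hga Het Hom Hde Hs Hi0 L Heps HeT Htau Hbef.
  assert (HA : 0 < avgk n p) by (apply avg_pos; auto).
  assert (HC : 0 < Cth n p phi).
  { unfold Cth. apply Rmult_lt_0_compat. apply Rinv_0_lt_compat; auto.
    apply sumk_pos; auto. intros i Hi. destruct (Hpar i Hi) as [_ [? _]]. specialize (Hp i Hi).
    apply Rmult_lt_0_compat; auto. }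
  set (C := Cth n p phi) in *.
  assert (HLs : 0 < sumk n lam) by (apply sumk_pos; auto; intros; apply Hpar; auto).
  assert (HMs : 0 < sumk n mu) by (apply sumk_pos; auto; intros; apply Hpar; auto).
  assert (HL : 0 < L) by (unfold L, Lc; fold C; nra).
  set (e := eps * exp (L * tau)).
  assert (He0 : 0 < e) by (unfold e; apply Rmult_lt_0_compat; auto; apply exp_pos).
  assert (He1 : e <= 1).
  { unfold e. assert (exp (L * tau) <= exp (L * T)).
    { destruct (Req_dec tau T) as [->|]; [lra|]. left; apply exp_increasing; nra. }
    assert (eps * exp (L * T) <= 1).
    { replace 1 with (exp (- L * T) * exp (L * T)).
      apply Rmult_le_compat_r; auto. left; apply exp_pos.
      rewrite <- exp_plus. replace (- L * T + L * T) with 0 by ring. apply exp_0. }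
    assert (0 < exp (L * tau)) by apply exp_pos. nra. }
  assert (Hz : forall (X : nat -> R -> R) k x', derivable_pt_lim (X k) tau x' ->
            derivable_pt_lim (fun t => X k t + eps * exp (L * t)) tau (x' + L * e)).
  { intros X k x' H. eapply dval. apply dplus. exact H. apply dscal, dexp. unfold e; ring. }
  assert (Hnn : forall (X : nat -> R -> R) k x', (1 <= k <= n)%nat -> derivable_pt_lim (X k) tau x' ->
            (forall s, 0 <= s < tau -> 0 < X k s + eps * exp (L * s)) -> - e <= X k tau).
  { intros X k x' Hk H Hpos. assert (0 <= X k tau + eps * exp (L * tau)).
    { apply (left_nonneg (fun t => X k t + eps * exp (L * t))). lra. eapply dcont. apply Hz. exact H. exact Hpos. }
    unfold e; lra. }
  assert (Hlow : forall i, (1 <= i <= n)%nat ->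
     - e <= S i tau /\ - e <= V i tau /\ - e <= I i tau /\ - e <= Q i tau).
  { intros i Hi. destruct (Hs i Hi) as [_ [_ [_ [_ Hder]]]].
    destruct (Hder tau ltac:(lra)) as [dS [dV [dI dQ]]].
    repeat split; eapply Hnn; eauto; intros s Hs'; apply (Hbef s Hs' i Hi). }
  assert (Hup : forall i, (1 <= i <= n)%nat ->
     S i tau <= 4 /\ V i tau <= 4 /\ I i tau <= 4 /\ Q i tau <= 4).
  { intros i Hi. pose proof (conservation n p lam phi mu b d Phi beta gamma eta omega delta S V I Q
       Hd Hb HP Hs Hi0 i Hi tau ltac:(lra)) as Hc.
    destruct (Nstar_bounds b d Phi i Hd Hb HP ltac:(lia)). destruct (Hlow i Hi) as [? [? [? ?]]].
    repeat split; lra. }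
  assert (Hth : - e * C <= Theta n p phi I tau <= 4 * C).
  { apply Theta_bounds; auto. intros k Hk; split; [apply Hp|apply Hpar]; auto.
    intros i Hi; split; [apply Hlow|apply Hup]; auto. }
  set (th := Theta n p phi I tau) in *.
  intros k Hk.
  destruct (Hs k Hk) as [_ [_ [_ [_ Hder]]]].
  destruct (Hder tau ltac:(lra)) as [dS [dV [dI dQ]]].
  destruct (Hpar k Hk) as [Hl [Hph Hmu]].
  assert (Hlk : lam k <= sumk n lam) by (apply term_le_sumk; auto; intros; left; apply Hpar; auto).
  assert (Hmk : mu k <= sumk n mu) by (apply term_le_sumk; auto; intros; left; apply Hpar; auto).
  destruct (Hlow k Hk) as [lS [lV [lI lQ]]]. destruct (Hup k Hk) as [uS [uV [uI uQ]]].
  assert (HLam : 0 < Lam b d Phi k).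
  { rewrite Lam_eq by (auto; lia). destruct (Nstar_bounds b d Phi k Hd Hb HP ltac:(lia)). nra. }
  assert (HLe : L * e = (8 * sumk n lam * C + sumk n mu + gamma + eta + omega + beta + 1) * e)
    by (unfold L, Lc; fold C; ring).
  assert (F1 : gamma * I k tau >= - gamma * e) by nra.
  assert (F2 : eta * Q k tau >= - eta * e) by nra.
  assert (F3 : omega * V k tau >= - omega * e) by nra.
  assert (F4 : (mu k + d) * e >= 0) by nra.
  assert (F5 : mu k * S k tau >= - sumk n mu * e) by nra.
  assert (F6 : beta * I k tau >= - beta * e) by nra.
  assert (F7 : 0 <= 8 * sumk n lam * C * e) by (apply Rmult_le_pos; [apply Rmult_le_pos; [apply Rmult_le_pos|]|]; lra).
  assert (F8 : 0 <= sumk n mu * e) by nra.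
  assert (F9 : (gamma + beta + d) * e >= 0) by nra.
  assert (F10 : (eta + d) * e >= 0) by nra.
  assert (F11 : (d + omega) * e >= 0) by nra.
  assert (F12 : beta * e >= 0) by nra.
  assert (F13 : gamma * e >= 0) by nra. assert (F14 : eta * e >= 0) by nra. assert (F15 : omega * e >= 0) by nra.
  repeat split; apply Rnot_le_lt; intro Hz0.
  - assert (HSe : S k tau = - e) by (fold e in Hz0; lra).
    pose proof (deriv_hit _ _ _ (proj1 Htau) (Hz S k _ dS) Hz0 (fun s Hs' => proj1 (Hbef s Hs' k Hk))) as Hc.
    rewrite HSe in Hc.
    assert (lam k * e * th >= - (sumk n lam) * e * C) by (apply lem_lb; auto; lra).
    fold th in Hc. lra.
  - assert (HVe : V k tau = - e) by (fold e in Hz0; lra).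
    pose proof (deriv_hit _ _ _ (proj1 Htau) (Hz V k _ dV) Hz0 (fun s Hs' => proj1 (proj2 (Hbef s Hs' k Hk)))) as Hc.
    rewrite HVe in Hc.
    assert (lam k * e * th >= - (sumk n lam) * e * C) by (apply lem_lb; auto; lra).
    assert (delta * (lam k * e * th) >= - (sumk n lam * e * C)).
    { apply del_lb; auto. lra. nra. }
    fold th in Hc. lra.
  - assert (HIe : I k tau = - e) by (fold e in Hz0; lra).
    pose proof (deriv_hit _ _ _ (proj1 Htau) (Hz I k _ dI) Hz0 (fun s Hs' => proj1 (proj2 (proj2 (Hbef s Hs' k Hk))))) as Hc.
    rewrite HIe in Hc.
    pose proof (prod_lb (S k tau) th e C He0 He1 HC lS uS (proj1 Hth) (proj2 Hth)).
    pose proof (prod_lb (V k tau) th e C He0 He1 HC lV uV (proj1 Hth) (proj2 Hth)).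
    assert (lam k * (S k tau * th) >= - sumk n lam * (4 * e * C)) by (apply (lem_lb2 (lam k)); auto; nra).
    assert (lam k * (V k tau * th) >= - sumk n lam * (4 * e * C)) by (apply (lem_lb2 (lam k)); auto; nra).
    assert (delta * (lam k * (V k tau * th)) >= - (sumk n lam * (4 * e * C))).
    { apply del_lb; auto. lra. nra. }
    fold th in Hc. lra.
  - assert (HQe : Q k tau = - e) by (fold e in Hz0; lra).
    pose proof (deriv_hit _ _ _ (proj1 Htau) (Hz Q k _ dQ) Hz0 (fun s Hs' => proj2 (proj2 (proj2 (Hbef s Hs' k Hk))))) as Hc.
    rewrite HQe in Hc. lra.
Qed.

Lemma good_nbhd n (S V I Q : nat -> R -> R) eps L Dm t0 :
  (forall k, (1 <= k <= n)%nat ->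
     ctsD Dm (fun t => S k t + eps * exp (L * t)) t0 /\ ctsD Dm (fun t => V k t + eps * exp (L * t)) t0 /\
     ctsD Dm (fun t => I k t + eps * exp (L * t)) t0 /\ ctsD Dm (fun t => Q k t + eps * exp (L * t)) t0) ->
  Good n S V I Q eps L t0 ->
  exists del, 0 < del /\ forall s, Dm s -> Rabs (s - t0) < del -> Good n S V I Q eps L s.
Proof.
  intros Hc Hg.
  destruct (unif_nbhd n (fun k s => 0 < S k s + eps * exp (L * s) /\ 0 < V k s + eps * exp (L * s) /\
    0 < I k s + eps * exp (L * s) /\ 0 < Q k s + eps * exp (L * s)) Dm t0) as [del [Hd H]].
  - intros k Hk. destruct (Hc k Hk) as [c1 [c2 [c3 c4]]]. destruct (Hg k Hk) as [g1 [g2 [g3 g4]]].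
    apply nbhd_and; [eapply pos_nbhd; eauto|].
    apply nbhd_and; [eapply pos_nbhd; eauto|].
    apply nbhd_and; eapply pos_nbhd; eauto.
  - exists del; split; [exact Hd|]. intros s Ds Hs k Hk. apply H; auto.
Qed.

Lemma pos_eps n p lam phi mu b d Phi beta gamma eta omega delta S V I Q T eps :
  (1 <= n)%nat ->
  (forall k, (1 <= k <= n)%nat -> 0 < p k) ->
  0 < d -> d < b -> 0 < Phi ->
  (forall k, (1 <= k <= n)%nat -> 0 < lam k /\ 0 < phi k /\ 0 < mu k) ->
  0 < beta -> 0 < gamma -> 0 < eta -> 0 < omega -> 0 <= delta <= 1 ->
  is_solution n p lam phi mu b d Phi beta gamma eta omega delta S V I Q ->
  admissible_init n b d Phi S V I Q ->
  let L := Lc n p lam phi mu beta gamma eta omega in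
  0 < T -> 0 < eps -> eps <= exp (- L * T) ->
  forall t, 0 <= t <= T -> Good n S V I Q eps L t.
Proof.
  intros Hn Hp Hd Hb HP Hpar Hbe Hga Het Hom Hde Hs Hi0 L HT Heps HeT.
  set (E := fun u => 0 <= u <= T /\ forall s, 0 <= s <= u -> Good n S V I Q eps L s).
  assert (G0 : Good n S V I Q eps L 0).
  { intros k Hk. destruct (Hi0 k Hk) as [a1 [a2 [a3 [a4 _]]]].
    rewrite Rmult_0_r, exp_0, Rmult_1_r. lra. }
  assert (E0 : E 0).
  { split; [lra|]. intros s Hs1. replace s with 0 by lra. exact G0. }
  destruct (completeness E) as [tau [Hub Hlub]].
  { exists T. intros u [Hu _]. lra. }
  { exists 0; exact E0. }
  assert (HtT : tau <= T) by (apply Hlub; intros u [Hu _]; lra).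
  assert (Ht0 : 0 <= tau) by (apply Hub; exact E0).
  assert (Ha : forall s, 0 <= s < tau -> Good n S V I Q eps L s).
  { intros s Hs1. destruct (classic (exists u, E u /\ s < u)) as [[u [[_ Hu] Hsu]]|Hno].
    - apply Hu; lra.
    - exfalso. assert (tau <= s).
      { apply Hlub. intros u Eu. apply Rnot_lt_le. intro. apply Hno. exists u; auto. }
      lra. }
  assert (Hcts : forall t0, 0 < t0 -> forall k, (1 <= k <= n)%nat ->
     ctsD (fun _ => True) (fun t => S k t + eps * exp (L * t)) t0 /\ ctsD (fun _ => True) (fun t => V k t + eps * exp (L * t)) t0 /\
     ctsD (fun _ => True) (fun t => I k t + eps * exp (L * t)) t0 /\ ctsD (fun _ => True) (fun t => Q k t + eps * exp (L * t)) t0).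
  { intros t0 Ht0' k Hk. destruct (Hs k Hk) as [_ [_ [_ [_ Hder]]]].
    destruct (Hder t0 Ht0') as [dS [dV [dI dQ]]].
    repeat split; apply ctsD_cont; eapply dcont; apply dplus; [eassumption| apply dscal, dexp|eassumption| apply dscal, dexp|eassumption| apply dscal, dexp|eassumption| apply dscal, dexp]. }
  assert (Htp : 0 < tau).
  { destruct (good_nbhd n S V I Q eps L (fun s => 0 <= s) 0) as [del [Hdl Hn0]].
    - intros k Hk. destruct (Hs k Hk) as [c1 [c2 [c3 [c4 _]]]].
      repeat split; apply ctsD_rc; apply rc_plus; auto; apply rc_scal, rc_exp.
    - exact G0.
    - set (u := Rmin (del/2) T).
      assert (0 < u) by (unfold u; apply Rmin_pos; lra).
      assert (u <= del/2) by apply Rmin_l. assert (u <= T) by apply Rmin_r.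
      assert (E u).
      { split; [lra|]. intros s Hs'. apply Hn0. lra. rewrite Rminus_0_r, Rabs_right; lra. }
      assert (u <= tau) by (apply Hub; auto). lra. }
  assert (Gt : Good n S V I Q eps L tau).
  { apply (hit_step n p lam phi mu b d Phi beta gamma eta omega delta S V I Q T eps tau); auto. }
  assert (HtT' : tau = T).
  { destruct (Req_dec tau T) as [|Hne]; auto. exfalso.
    destruct (good_nbhd n S V I Q eps L (fun _ => True) tau) as [del [Hdl Hn0]].
    - apply Hcts; auto.
    - exact Gt.
    - set (u := Rmin (tau + del/2) T).
      assert (tau < u) by (unfold u; apply Rmin_glb_lt; lra).
      assert (u <= tau + del/2) by apply Rmin_l. assert (u <= T) by apply Rmin_r.
      assert (E u).
      { split; [lra|]. intros s Hs'.
        destruct (Rlt_or_le s tau). apply Ha; lra.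
        destruct (Req_dec s tau) as [->|]. exact Gt.
        apply Hn0; auto. rewrite Rabs_right; lra. }
      assert (u <= tau) by (apply Hub; auto). lra. }
  intros t Ht. destruct (Rlt_or_le t tau). apply Ha; lra.
  replace t with tau by lra. exact Gt.
Qed.

Lemma positivity n p lam phi mu b d Phi beta gamma eta omega delta S V I Q :
  (1 <= n)%nat ->
  (forall k, (1 <= k <= n)%nat -> 0 < p k) ->
  0 < d -> d < b -> 0 < Phi ->
  (forall k, (1 <= k <= n)%nat -> 0 < lam k /\ 0 < phi k /\ 0 < mu k) ->
  0 < beta -> 0 < gamma -> 0 < eta -> 0 < omega -> 0 <= delta <= 1 ->
  is_solution n p lam phi mu b d Phi beta gamma eta omega delta S V I Q ->
  admissible_init n b d Phi S V I Q ->
  forall k, (1 <= k <= n)%nat -> forall t, 0 <= t ->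
    0 <= S k t /\ 0 <= V k t /\ 0 <= I k t /\ 0 <= Q k t.
Proof.
  intros Hn Hp Hd Hb HP Hpar Hbe Hga Het Hom Hde Hs Hi0 k Hk t Ht.
  set (L := Lc n p lam phi mu beta gamma eta omega).
  assert (key : forall x, (forall eps, 0 < eps -> eps <= exp (- L * (t + 1)) -> 0 < x + eps * exp (L * t)) -> 0 <= x).
  { intros x Hx. apply Rnot_lt_le; intro Hneg.
    set (eps := Rmin (exp (- L * (t + 1))) (- x * exp (- L * t) / 2)).
    assert (0 < exp (- L * (t + 1))) by apply exp_pos.
    assert (0 < exp (- L * t)) by apply exp_pos.
    assert (0 < - x * exp (- L * t) / 2) by nra.
    assert (0 < eps) by (unfold eps; apply Rmin_pos; lra).
    assert (eps <= exp (- L * (t + 1))) by apply Rmin_l.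
    assert (eps <= - x * exp (- L * t) / 2) by apply Rmin_r.
    specialize (Hx eps ltac:(lra) ltac:(lra)).
    assert (exp (- L * t) * exp (L * t) = 1).
    { rewrite <- exp_plus. replace (- L * t + L * t) with 0 by ring. apply exp_0. }
    assert (0 < exp (L * t)) by apply exp_pos.
    assert (eps * exp (L * t) <= - x / 2) by nra. lra. }
  assert (HG : forall eps, 0 < eps -> eps <= exp (- L * (t + 1)) -> Good n S V I Q eps L t).
  { intros eps He1 He2. apply (pos_eps n p lam phi mu b d Phi beta gamma eta omega delta S V I Q (t + 1) eps); auto; lra. }
  repeat split; apply key; intros eps He1 He2; destruct (HG eps He1 He2 k Hk) as [? [? [? ?]]]; auto.
Qed.

Definition rho_c n p lam phi b d Phi beta gamma :=
  Rmin ((gamma + beta + d) * (1 - R0tilde n p lam phi b d Phi beta gamma)) d / 2.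
Definition CIc n p phi := sumk n (fun i => phi i * p i) * sumk n (fun i => / (phi i * p i)).
Definition CQc n p phi beta d := 1 + 2 * beta * CIc n p phi / d.
Definition Cvc n p lam phi mu beta d :=
  1 + 2 * (sumk n mu * (CIc n p phi + CQc n p phi beta d)
           + sumk n lam * sumk n (fun i => phi i * p i) / avgk n p) / d.
Definition Cst n p lam phi mu beta d :=
  Cvc n p lam phi mu beta d + CIc n p phi + CQc n p phi beta d.

Lemma Rabs_def2b a b : Rabs a <= b -> - b <= a <= b.
Proof. intros H. pose proof (Rle_abs a). pose proof (Rle_abs (- a)). rewrite Rabs_Ropp in *. lra. Qed.

Lemma div_half K a r d : 0 <= K -> 0 < d -> d / 2 <= a - r -> K / (a - r) <= 2 * K / d.
Proof.
  intros. unfold Rdiv. replace (2 * K * / d) with (K * / (d / 2)) by (field; lra).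
  apply Rmult_le_compat_l; auto. apply Rinv_le_contravar; lra.
Qed.

Lemma Rtilde_eq n p lam phi b d Phi beta gamma : 0 < d -> d < b -> 0 < Phi -> 0 < beta -> 0 < gamma ->
  R0tilde n p lam phi b d Phi beta gamma * (gamma + beta + d) =
  / avgk n p * sumk n (fun i => phi i * p i * lam i * Nstar b d Phi i).
Proof.
  intros. unfold R0tilde. rewrite Rmult_assoc. f_equal.
  rewrite Rmult_comm, <- sumk_scal. apply sumk_ext. intros k Hk.
  rewrite Lam_eq by (auto; lia). field. lra.
Qed.

Lemma core n p lam phi mu b d Phi beta gamma eta omega delta S V I Q D :
  (1 <= n)%nat ->
  (forall k, (1 <= k <= n)%nat -> 0 < p k) ->
  0 < d -> d < b -> 0 < Phi ->
  (forall k, (1 <= k <= n)%nat -> 0 < lam k /\ 0 < phi k /\ 0 < mu k) ->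
  0 < beta -> 0 < gamma -> 0 < eta -> 0 < omega -> 0 <= delta <= 1 ->
  R0tilde n p lam phi b d Phi beta gamma < 1 ->
  is_solution n p lam phi mu b d Phi beta gamma eta omega delta S V I Q ->
  admissible_init n b d Phi S V I Q ->
  0 <= D ->
  (forall j, (1 <= j <= n)%nat -> I j 0 <= D /\ Q j 0 <= D /\ Rabs (V j 0 - V0 b d Phi omega mu j) <= D) ->
  let r := rho_c n p lam phi b d Phi beta gamma in
  let Cs := Cst n p lam phi mu beta d in
  forall k, (1 <= k <= n)%nat -> forall t, 0 <= t ->
    Rabs (S k t - S0 b d Phi omega mu k) <= D * Cs * exp (- r * t) /\
    Rabs (V k t - V0 b d Phi omega mu k) <= D * Cs * exp (- r * t) /\
    Rabs (I k t) <= D * Cs * exp (- r * t) /\ Rabs (Q k t) <= D * Cs * exp (- r * t).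
Proof.
  intros Hn Hp Hd Hb HP Hpar Hbe Hga Het Hom Hde HR Hs Hi0 HD HD0 r Cs.
  pose proof (positivity n p lam phi mu b d Phi beta gamma eta omega delta S V I Q Hn Hp Hd Hb HP Hpar Hbe Hga Het Hom Hde Hs Hi0) as Pos.
  pose proof (conservation n p lam phi mu b d Phi beta gamma eta omega delta S V I Q Hd Hb HP Hs Hi0) as Cons.
  assert (HA : 0 < avgk n p) by (apply avg_pos; auto).
  set (c := gamma + beta + d).
  set (Rt := R0tilde n p lam phi b d Phi beta gamma) in *.
  set (a := c * (1 - Rt)).
  assert (Ha : 0 < a) by (unfold a, c; apply Rmult_lt_0_compat; lra).
  assert (Hr : r = Rmin a d / 2) by reflexivity.
  assert (Hr0 : 0 < r) by (rewrite Hr; assert (0 < Rmin a d) by (apply Rmin_pos; lra); lra).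
  assert (Hra : r <= a / 2) by (rewrite Hr; assert (Rmin a d <= a) by apply Rmin_l; lra).
  assert (Hrd : r <= d / 2) by (rewrite Hr; assert (Rmin a d <= d) by apply Rmin_r; lra).
  set (W := fun t => sumk n (fun i => phi i * p i * I i t)).
  set (Phs := sumk n (fun i => phi i * p i)).
  set (Ms := sumk n (fun i => / (phi i * p i))).
  assert (Hpp : forall i, (1 <= i <= n)%nat -> 0 < phi i * p i).
  { intros i Hi. apply Rmult_lt_0_compat; [apply Hpar|apply Hp]; auto. }
  assert (HW0 : W 0 <= D * Phs).
  { unfold W, Phs. rewrite <- sumk_scal. apply sumk_le. intros i Hi.
    specialize (Hpp i Hi). destruct (HD0 i Hi) as [? _]. nra. }
  assert (HWnn : forall t, 0 <= t -> 0 <= W t).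
  { intros t Ht. apply sumk_nonneg. intros i Hi. specialize (Hpp i Hi).
    destruct (Pos i Hi t Ht) as [_ [_ [? _]]]. nra. }
  assert (HWd : forall t, 0 <= t -> W t <= D * Phs * exp (- r * t)).
  { intros t Ht.
    assert (U := decay W (fun t => sumk n (fun i => phi i * p i *
        (lam i * S i t * Theta n p phi I t + delta * lam i * V i t * Theta n p phi I t - c * I i t)))
        a 0 r).
    refine (Rle_trans _ _ _ (U _ _ _ _ _ t Ht) _).
    - unfold W. apply rc_sumk. intros i Hi. apply rc_scal. apply (Hs i Hi).
    - intros s Hs'. unfold W. apply (dsumk n (fun i t => phi i * p i * I i t)). intros i Hi.
      apply dscal. apply (Hs i Hi); auto.
    - intros s Hs'. rewrite Rmult_0_l, Rplus_0_r.
      assert (Hth : Theta n p phi I s = / avgk n p * W s) by reflexivity.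
      assert (Hth0 : 0 <= Theta n p phi I s).
      { rewrite Hth. apply Rmult_le_pos. left; apply Rinv_0_lt_compat; auto. apply HWnn; lra. }
      eapply Rle_trans.
      { apply (sumk_le n _ (fun i => Theta n p phi I s * (phi i * p i * lam i * Nstar b d Phi i) + (- c) * (phi i * p i * I i s))).
        intros i Hi. specialize (Hpp i Hi). destruct (Pos i Hi s ltac:(lra)) as [a1 [a2 [a3 a4]]].
        specialize (Cons i Hi s ltac:(lra)). destruct (Hpar i Hi) as [Hl _].
        assert (S i s + delta * V i s <= Nstar b d Phi i) by nra.
        assert (lam i * (S i s + delta * V i s) * Theta n p phi I s <= lam i * Nstar b d Phi i * Theta n p phi I s).
        { apply Rmult_le_compat_r; auto. apply Rmult_le_compat_l; lra. }
        nra. }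
      rewrite sumk_plus, !sumk_scal.
      assert (E1 : / avgk n p * sumk n (fun i => phi i * p i * lam i * Nstar b d Phi i) = Rt * c).
      { rewrite <- (Rtilde_eq n p lam phi b d Phi beta gamma) by auto. reflexivity. }
      replace (Theta n p phi I s * sumk n (fun i => phi i * p i * lam i * Nstar b d Phi i))
        with (W s * (Rt * c)) by (rewrite Hth, <- E1; ring).
      change (sumk n (fun k => phi k * p k * I k s)) with (W s). unfold a. apply Req_le. ring.
    - lra.
    - lra.
    - rewrite Rmax_left by (apply HWnn; lra). unfold Rdiv. rewrite Rmult_0_l, Rplus_0_r.
      apply Rmult_le_compat_r. left; apply exp_pos. exact HW0. }
  set (CI := CIc n p phi). set (CQ := CQc n p phi beta d). set (Cv := Cvc n p lam phi mu beta d).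
  assert (HPhs : 0 < Phs) by (apply sumk_pos; auto).
  assert (HMs : 0 < Ms) by (apply sumk_pos; auto; intros i Hi; apply Rinv_0_lt_compat; auto).
  assert (HCI : 0 < CI) by (unfold CI, CIc; fold Phs Ms; nra).
  assert (HCQ : 0 < CQ).
  { unfold CQ, CQc; fold CI. assert (0 <= 2 * beta * CI / d); [|lra].
    unfold Rdiv; apply Rmult_le_pos; [nra|left; apply Rinv_0_lt_compat; lra]. }
  assert (HLs : 0 < sumk n lam) by (apply sumk_pos; auto; intros; apply Hpar; auto).
  assert (HMus : 0 < sumk n mu) by (apply sumk_pos; auto; intros; apply Hpar; auto).
  set (Kv := sumk n mu * (CI + CQ) + sumk n lam * Phs / avgk n p).
  assert (HKv : 0 < Kv).
  { unfold Kv. assert (0 < sumk n lam * Phs / avgk n p) by (unfold Rdiv; apply Rmult_lt_0_compat; [nra|apply Rinv_0_lt_compat; auto]). nra. }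
  assert (HCv : Cv = 1 + 2 * Kv / d) by reflexivity.
  assert (HCv0 : 0 < Cv) by (rewrite HCv; assert (0 < 2 * Kv / d) by (unfold Rdiv; apply Rmult_lt_0_compat; [lra|apply Rinv_0_lt_compat; lra]); lra).
  assert (HCs : Cs = Cv + CI + CQ) by reflexivity.
  assert (Hexp : forall t, 0 < exp (- r * t)) by (intros; apply exp_pos).
  assert (HI : forall k, (1 <= k <= n)%nat -> forall t, 0 <= t -> I k t <= D * CI * exp (- r * t)).
  { intros k Hk t Ht. pose proof (Hpp k Hk) as Hppk.
    assert (H1 : phi k * p k * I k t <= W t).
    { unfold W. apply (term_le_sumk n (fun i => phi i * p i * I i t)); auto.
      intros i Hi. specialize (Hpp i Hi) . destruct (Pos i Hi t Ht) as [_ [_ [? _]]]. nra. }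
    assert (H2 : / (phi k * p k) <= Ms).
    { unfold Ms. apply (term_le_sumk n (fun i => / (phi i * p i))); auto.
      intros i Hi. left; apply Rinv_0_lt_compat; auto. }
    assert (H3 : I k t <= W t * / (phi k * p k)).
    { apply (Rmult_le_reg_l (phi k * p k)); auto. rewrite (Rmult_comm (W t)), <- Rmult_assoc, Rinv_r by lra. lra. }
    specialize (HWd t Ht). specialize (HWnn t Ht).
    assert (W t * / (phi k * p k) <= W t * Ms) by (apply Rmult_le_compat_l; auto).
    assert (W t * Ms <= D * Phs * exp (- r * t) * Ms) by (apply Rmult_le_compat_r; lra).
    unfold CI, CIc; fold Phs Ms. specialize (Hexp t). nra. }
  assert (HQ : forall k, (1 <= k <= n)%nat -> forall t, 0 <= t -> Q k t <= D * CQ * exp (- r * t)).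
  { intros k Hk t Ht.
    assert (U := decay (Q k) (fun t => beta * I k t - (eta + d) * Q k t) (eta + d) (beta * D * CI) r).
    refine (Rle_trans _ _ _ (U _ _ _ _ _ t Ht) _).
    - apply (Hs k Hk).
    - intros s0 Hs0. apply (Hs k Hk); auto.
    - intros s0 Hs0. specialize (HI k Hk s0 ltac:(lra)). nra.
    - lra.
    - apply Rmult_le_pos; nra.
    - destruct (HD0 k Hk) as [_ [HQ0 _]]. destruct (Pos k Hk 0 ltac:(lra)) as [_ [_ [_ HQ0']]].
      rewrite Rmax_left by lra.
      assert (beta * D * CI / (eta + d - r) <= 2 * (beta * D * CI) / d) by (apply div_half; [apply Rmult_le_pos; [apply Rmult_le_pos|]; lra|lra|lra]).
      apply Rmult_le_compat_r. left; auto.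
      unfold CQ, CQc; fold CI. replace (D * (1 + 2 * beta * CI / d)) with (D + 2 * (beta * D * CI) / d) by (field; lra).
      lra. }
  assert (HVv : forall k, (1 <= k <= n)%nat -> forall t, 0 <= t -> Rabs (V k t - V0 b d Phi omega mu k) <= D * Cv * exp (- r * t)).
  { intros k Hk t Ht. destruct (Hpar k Hk) as [Hl [Hph Hmu]].
    destruct (Nstar_bounds b d Phi k Hd Hb HP ltac:(lia)) as [HN1 HN2].
    assert (HV0 : (mu k + omega + d) * V0 b d Phi omega mu k = mu k * Nstar b d Phi k).
    { unfold V0. field. lra. }
    set (V0k := V0 b d Phi omega mu k) in *. set (Nk := Nstar b d Phi k) in *.
    set (Vd := fun t => mu k * S k t - delta * lam k * V k t * Theta n p phi I t - (d + omega) * V k t).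
    assert (Dv : forall s, 0 < s -> derivable_pt_lim (fun t => V k t - V0k) s (Vd s)).
    { intros s Hs'. eapply dval. apply dminus. apply (Hs k Hk); auto. apply dconst. unfold Vd; ring. }
    assert (Rcv : right_cont0 (fun t => V k t - V0k)) by (apply rc_minus; [apply (Hs k Hk)|apply rc_const]).
    assert (Hth : forall s, 0 <= s -> 0 <= Theta n p phi I s /\ Theta n p phi I s <= D * Phs / avgk n p * exp (- r * s)).
    { intros s Hs'. assert (Theta n p phi I s = / avgk n p * W s) by reflexivity.
      assert (0 < / avgk n p) by (apply Rinv_0_lt_compat; auto).
      specialize (HWd s Hs'). specialize (HWnn s Hs'). split. nra.
      unfold Rdiv. nra. }
    assert (Hup : V k t - V0k <= D * exp (- r * t)).
    { assert (U := decay (fun t => V k t - V0k) Vd (mu k + omega + d) 0 r Rcv Dv).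
      refine (Rle_trans _ _ _ (U _ _ _ t Ht) _).
      - intros s Hs'. specialize (Cons k Hk s ltac:(lra)). destruct (Pos k Hk s ltac:(lra)) as [a1 [a2 [a3 a4]]].
        destruct (Hth s ltac:(lra)) as [t1 _].
        assert (0 <= delta * lam k * V k s * Theta n p phi I s).
        { apply Rmult_le_pos; [apply Rmult_le_pos; [apply Rmult_le_pos|]|]; lra. }
        unfold Vd. replace (S k s) with (Nk - V k s - I k s - Q k s) by (fold Nk in Cons; lra).
        assert (0 * exp (- r * s) = 0) by ring. nra.
      - lra.
      - lra.
      - destruct (HD0 k Hk) as [_ [_ Hv0]]. apply Rabs_def2b in Hv0. fold V0k in Hv0.
        unfold Rdiv; rewrite Rmult_0_l, Rplus_0_r. apply Rmult_le_compat_r. left; auto.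
        apply Rmax_lub; lra. }
    assert (Hlo : - (V k t - V0k) <= D * Cv * exp (- r * t)).
    { assert (U := decay (fun t => - (V k t - V0k)) (fun t => - Vd t) (mu k + omega + d) (D * Kv) r (rc_opp _ Rcv)).
      refine (Rle_trans _ _ _ (U _ _ _ _ t Ht) _).
      - intros s Hs'. apply dopp. auto.
      - intros s Hs'. specialize (Cons k Hk s ltac:(lra)). destruct (Pos k Hk s ltac:(lra)) as [a1 [a2 [a3 a4]]].
        destruct (Hth s ltac:(lra)) as [t1 t2].
        specialize (HI k Hk s ltac:(lra)). specialize (HQ k Hk s ltac:(lra)).
        assert (Hlk : lam k <= sumk n lam) by (apply term_le_sumk; auto; intros; left; apply Hpar; auto).
        assert (Hmk : mu k <= sumk n mu) by (apply term_le_sumk; auto; intros; left; apply Hpar; auto).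
        assert (E1 : delta * lam k * V k s * Theta n p phi I s <= sumk n lam * (D * Phs / avgk n p * exp (- r * s))).
        { assert (V k s <= 1) by (fold Nk in Cons; lra).
          assert (HdV0 : 0 <= delta * V k s) by (apply Rmult_le_pos; lra).
          assert (delta * V k s <= 1) by nra.
          replace (delta * lam k * V k s * Theta n p phi I s) with (lam k * (delta * V k s) * Theta n p phi I s) by ring.
          assert (lam k * (delta * V k s) <= sumk n lam) by nra.
          assert (0 <= lam k * (delta * V k s)) by (apply Rmult_le_pos; lra).
          apply Rmult_le_compat; lra. }
        assert (E2 : mu k * (I k s + Q k s) <= sumk n mu * (D * CI * exp (- r * s) + D * CQ * exp (- r * s))).
        { assert (0 <= I k s + Q k s) by lra. apply Rmult_le_compat; lra. }
        unfold Vd. replace (S k s) with (Nk - V k s - I k s - Q k s) by (fold Nk in Cons; lra).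
        unfold Kv. nra.
      - lra.
      - nra.
      - destruct (HD0 k Hk) as [_ [_ Hv0]]. apply Rabs_def2b in Hv0. fold V0k in Hv0.
        assert (D * Kv / (mu k + omega + d - r) <= 2 * (D * Kv) / d) by (apply div_half; [nra|lra|lra]).
        apply Rmult_le_compat_r. left; auto. rewrite HCv.
        replace (D * (1 + 2 * Kv / d)) with (D + 2 * (D * Kv) / d) by (field; lra).
        assert (Rmax (- (V k 0 - V0k)) 0 <= D) by (apply Rmax_lub; lra). lra. }
    assert (D * exp (- r * t) <= D * Cv * exp (- r * t)).
    { specialize (Hexp t). assert (1 <= Cv) by (rewrite HCv; assert (0 < 2 * Kv / d) by (unfold Rdiv; apply Rmult_lt_0_compat; [lra|apply Rinv_0_lt_compat; lra]); lra). nra. }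
    apply Rabs_le. lra. }
  intros k Hk t Ht.
  specialize (HVv k Hk t Ht). specialize (HI k Hk t Ht). specialize (HQ k Hk t Ht).
  destruct (Pos k Hk t Ht) as [a1 [a2 [a3 a4]]]. specialize (Cons k Hk t Ht).
  specialize (Hexp t).
  assert (HSV : S0 b d Phi omega mu k + V0 b d Phi omega mu k = Nstar b d Phi k).
  { unfold S0, V0. destruct (Hpar k Hk) as [_ [_ ?]]. field. lra. }
  assert (DCv : 0 <= D * CI * exp (- r * t)) by (apply Rmult_le_pos; [nra|lra]).
  assert (DCq : 0 <= D * CQ * exp (- r * t)) by (apply Rmult_le_pos; [nra|lra]).
  assert (DCvv : 0 <= D * Cv * exp (- r * t)) by (apply Rmult_le_pos; [nra|lra]).
  assert (Htot : D * Cs * exp (- r * t) = D * Cv * exp (- r * t) + D * CI * exp (- r * t) + D * CQ * exp (- r * t))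
    by (rewrite HCs; ring).
  rewrite Htot. apply Rabs_def2b in HVv.
  repeat split.
  - apply Rabs_le. lra.
  - apply Rabs_le. lra.
  - rewrite Rabs_right; lra.
  - rewrite Rabs_right; lra.
Qed.

Theorem theorem4p7 (n : nat) (p lam phi mu : nat -> R)
    (b d Phi beta gamma eta omega delta : R) :
  (1 <= n)%nat ->
  (forall k, (1 <= k <= n)%nat -> 0 < p k) ->
  sumk n p = 1 ->
  0 < d -> d < b ->
  0 < Phi ->
  Phi = / avgk n p * sumk n (fun i => INR i * p i * b * Phi / (d + b * INR i * Phi)) ->
  (forall k, (1 <= k <= n)%nat -> 0 < lam k /\ 0 < phi k /\ 0 < mu k) ->
  0 < beta -> 0 < gamma -> 0 < eta -> 0 < omega ->
  0 <= delta <= 1 ->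
  R0tilde n p lam phi b d Phi beta gamma < 1 ->
  (* Lyapunov stability (within the feasible region) *)
  (forall eps, 0 < eps -> exists del, 0 < del /\
     forall S V I Q : nat -> R -> R,
       is_solution n p lam phi mu b d Phi beta gamma eta omega delta S V I Q ->
       admissible_init n b d Phi S V I Q ->
       near_E0 n b d Phi omega mu S V I Q del 0 ->
       forall t, 0 <= t -> near_E0 n b d Phi omega mu S V I Q eps t)
  /\
  (* global attractivity *)
  (forall S V I Q : nat -> R -> R,
     is_solution n p lam phi mu b d Phi beta gamma eta omega delta S V I Q ->
     admissible_init n b d Phi S V I Q ->
     forall eps, 0 < eps -> exists T, forall t, T <= t ->
       near_E0 n b d Phi omega mu S V I Q eps t).
Proof.
  intros Hn Hp _ Hd Hb HP _ Hpar Hbe Hga Het Hom Hde HR.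
  set (r := rho_c n p lam phi b d Phi beta gamma).
  set (Cs := Cst n p lam phi mu beta d).
  assert (Hr0 : 0 < r).
  { unfold r, rho_c. assert (0 < Rmin ((gamma + beta + d) * (1 - R0tilde n p lam phi b d Phi beta gamma)) d); [|lra].
    apply Rmin_pos; [apply Rmult_lt_0_compat|]; lra. }
  assert (HCs : 0 <= Cs).
  { unfold Cs, Cst, Cvc, CQc, CIc.
    assert (HA : 0 < avgk n p) by (apply avg_pos; auto).
    assert (0 < sumk n (fun i => phi i * p i)) by (apply sumk_pos; auto; intros i Hi; apply Rmult_lt_0_compat; [apply Hpar|apply Hp]; auto).
    assert (0 < sumk n (fun i => / (phi i * p i))) by (apply sumk_pos; auto; intros i Hi; apply Rinv_0_lt_compat, Rmult_lt_0_compat; [apply Hpar|apply Hp]; auto).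
    assert (0 < sumk n lam) by (apply sumk_pos; auto; intros; apply Hpar; auto).
    assert (0 < sumk n mu) by (apply sumk_pos; auto; intros; apply Hpar; auto).
    set (X := sumk n (fun i => phi i * p i)) in *. set (Y := sumk n (fun i => / (phi i * p i))) in *.
    assert (0 < X * Y) by nra.
    assert (0 <= 2 * beta * (X * Y) / d) by (unfold Rdiv; apply Rmult_le_pos; [nra|left; apply Rinv_0_lt_compat; lra]).
    assert (0 <= sumk n lam * X / avgk n p) by (unfold Rdiv; apply Rmult_le_pos; [nra|left; apply Rinv_0_lt_compat; lra]).
    assert (0 <= sumk n mu * (X * Y + (1 + 2 * beta * (X * Y) / d))) by nra.
    assert (0 <= 2 * (sumk n mu * (X * Y + (1 + 2 * beta * (X * Y) / d)) + sumk n lam * X / avgk n p) / d)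
      by (unfold Rdiv; apply Rmult_le_pos; [nra|left; apply Rinv_0_lt_compat; lra]).
    lra. }
  assert (Hexp1 : forall t, 0 <= t -> exp (- r * t) <= 1).
  { intros t Ht. rewrite <- exp_0. destruct (Req_dec t 0) as [->|].
    rewrite Rmult_0_r; lra. left; apply exp_increasing; nra. }
  split.
  - intros eps Heps. exists (eps / (Cs + 1)). split.
    { unfold Rdiv; apply Rmult_lt_0_compat; [lra|apply Rinv_0_lt_compat; lra]. }
    intros S V I Q Hs Hi Hnear t Ht k Hk.
    set (del := eps / (Cs + 1)).
    assert (Hdel : 0 < del) by (unfold del, Rdiv; apply Rmult_lt_0_compat; [lra|apply Rinv_0_lt_compat; lra]).
    assert (Hdc : del * Cs < eps).
    { unfold del. apply (Rmult_lt_reg_r (Cs + 1)); [lra|].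
      replace (eps / (Cs + 1) * Cs * (Cs + 1)) with (eps * Cs) by (field; lra). nra. }
    assert (B := core n p lam phi mu b d Phi beta gamma eta omega delta S V I Q del Hn Hp Hd Hb HP Hpar Hbe Hga Het Hom Hde HR Hs Hi (Rlt_le _ _ Hdel)).
    assert (Hini : forall j, (1 <= j <= n)%nat -> I j 0 <= del /\ Q j 0 <= del /\ Rabs (V j 0 - V0 b d Phi omega mu j) <= del).
    { intros j Hj; destruct (Hnear j Hj) as [_ [a2 [a3 a4]]].
      pose proof (Rle_abs (I j 0)). pose proof (Rle_abs (Q j 0)).
      fold del in a2, a3, a4. repeat split; lra. }
    destruct (B Hini k Hk t Ht) as [b1 [b2 [b3 b4]]].
    fold r Cs in b1, b2, b3, b4.
    assert (del * Cs * exp (- r * t) <= del * Cs).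
    { specialize (Hexp1 t Ht). assert (0 <= del * Cs) by nra. nra. }
    repeat split; lra.
  - intros S V I Q Hs Hi eps Heps.
    set (T0 := ln ((Cs + 1) / eps) / r).
    exists (Rmax 0 T0). intros t Ht k Hk.
    assert (Ht0 : 0 <= t) by (eapply Rle_trans; [apply Rmax_l|exact Ht]).
    assert (HtT : T0 <= t) by (eapply Rle_trans; [apply Rmax_r|exact Ht]).
    assert (Pos := positivity n p lam phi mu b d Phi beta gamma eta omega delta S V I Q Hn Hp Hd Hb HP Hpar Hbe Hga Het Hom Hde Hs Hi).
    assert (Cons := conservation n p lam phi mu b d Phi beta gamma eta omega delta S V I Q Hd Hb HP Hs Hi).
    assert (B := core n p lam phi mu b d Phi beta gamma eta omega delta S V I Q 1 Hn Hp Hd Hb HP Hpar Hbe Hga Het Hom Hde HR Hs Hi ltac:(lra)).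
    assert (Hini : forall j, (1 <= j <= n)%nat -> I j 0 <= 1 /\ Q j 0 <= 1 /\ Rabs (V j 0 - V0 b d Phi omega mu j) <= 1).
    { intros j Hj; destruct (Pos j Hj 0 ltac:(lra)) as [a1 [a2 [a3 a4]]].
      specialize (Cons j Hj 0 ltac:(lra)).
      destruct (Nstar_bounds b d Phi j Hd Hb HP ltac:(lia)).
      destruct (Hpar j Hj) as [_ [_ Hmu]].
      assert (0 <= V0 b d Phi omega mu j <= Nstar b d Phi j).
      { unfold V0; split. unfold Rdiv; apply Rmult_le_pos; [nra|left; apply Rinv_0_lt_compat; lra].
        apply (Rmult_le_reg_r (mu j + omega + d)); [lra|]; unfold Rdiv; rewrite Rmult_assoc, Rinv_l by lra; nra. }
      repeat split; try lra; apply Rabs_le; lra. }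
    destruct (B Hini k Hk t Ht0) as [b1 [b2 [b3 b4]]].
    fold r Cs in b1, b2, b3, b4.
    assert (He : exp (- r * t) <= eps / (Cs + 1)).
    { assert (0 < (Cs + 1) / eps) by (unfold Rdiv; apply Rmult_lt_0_compat; [lra|apply Rinv_0_lt_compat; lra]).
      assert (exp (- r * T0) = eps / (Cs + 1)).
      { unfold T0. replace (- r * (ln ((Cs + 1) / eps) / r)) with (- ln ((Cs + 1) / eps)) by (field; lra).
        rewrite exp_Ropp, exp_ln by auto. field. lra. }
      rewrite <- H0. destruct (Req_dec t T0) as [->|]. lra. left; apply exp_increasing; nra. }
    assert (1 * Cs * exp (- r * t) < eps).
    { assert (Cs * exp (- r * t) <= Cs * (eps / (Cs + 1))) by (apply Rmult_le_compat_l; auto).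
      assert (Cs * (eps / (Cs + 1)) < eps).
      { apply (Rmult_lt_reg_r (Cs + 1)); [lra|]. replace (Cs * (eps / (Cs + 1)) * (Cs + 1)) with (Cs * eps) by (field; lra). nra. }
      lra. }
    repeat split; lra.
Qed.
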